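(* Let $a,b\ge1$, $n=a+b+1$, $f=a+1$, and let $G$ be the $n\times n$ symmetric matrix with $G_{ii}=2$ for $i\neq f$, $G_{ff}=0$, $G_{i,i+1}=G_{i+1,i}=-1$ for $1\le i<n$, and all other entries $0$. With $m^S$ defined from $G$, $f$, $r',r''$ by $m^S_{ij}=r'G_{ij}$ for $i,j\le f$, $(i,j)\ne(f,f)$; $m^S_{ij}=r''G_{ij}$ for $i,j\ge f$, $(i,j)\neq(f,f)$; $m^S_{ij}=0$ if $i<f<j$ or $j<f<i$; $m^S_{ff}=1$: the matrix $m^S$ is positive definite with all diagonal entries $\le1$ if and only if $$0<r'\le\tfrac12,\qquad 0<r''\le\tfrac12,\qquad \tfrac{a}{a+1}r'+\tfrac{b}{b+1}r''<1.$$
   Context: This is the standard-chamber Gram matrix for the Lie superalgebra $A(a,b)$ rescaled by $r'$ on the bosonic part of type $A_a$ and by $r''$ on the bosonic part of type $A_b$, with fermionic simple root $\alpha_f$ of squared length $1$. *)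

(* Defs.v *)
From HB Require Import structures.
From mathcomp Require Import all_boot all_order all_algebra.
Set Implicit Arguments. Unset Strict Implicit. Unset Printing Implicit Defensive.
Import Order.TTheory GRing.Theory Num.Theory.
Local Open Scope ring_scope.

(* Indices are 0-based: 'I_(a+b+1), the fermionic index f = a+1 (1-based)
   becomes a (0-based). *)

Definition gramG (R : pzRingType) (a b : nat) : 'M[R]_(a + b + 1) :=
  \matrix_(i, j)
    if i == j then (if (i : nat) == a then 0 else 2%:R)
    else if ((i : nat).+1 == j) || ((j : nat).+1 == i) then -1 else 0.

Definition mS (R : pzRingType) (a b : nat) (r1 r2 : R) : 'M[R]_(a + b + 1) :=
  \matrix_(i, j)
    if ((i : nat) == a) && ((j : nat) == a) then 1
    else if ((i : nat) <= a)%N && ((j : nat) <= a)%N then r1 * gramG R a b i j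
    else if (a <= (i : nat))%N && (a <= (j : nat))%N then r2 * gramG R a b i j
    else 0.

Definition posdef (R : realFieldType) (n : nat) (M : 'M[R]_n) : Prop :=
  forall x : 'rV[R]_n, x != 0 -> 0 < (x *m M *m x^T) 0 0.
Arguments gramG R a b : clear implicits.
Arguments mS R a b r1 r2 : clear implicits.

(* Main.v *)
Require Import Defs.
From HB Require Import structures.
From mathcomp Require Import all_boot all_order all_algebra.
From mathcomp Require Import ring lra zify.
Import Order.TTheory GRing.Theory Num.Theory.
Local Open Scope ring_scope.


Section H.
Variable R : realFieldType.

Lemma core_ineq (c u v : R) : 0 < c ->
  v ^+ 2 / (c + 1) <= u ^+ 2 / c + (u - v) ^+ 2.
Proof.
move=> c0.
have c1 : 0 < c + 1 by lra.
have e : u ^+ 2 / c + (u - v) ^+ 2 - v ^+ 2 / (c + 1) =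
   ((c + 1) * u - c * v) ^+ 2 / (c * (c + 1)).
  field. by apply/andP; split; rewrite gt_eqF.
rewrite -subr_ge0 e divr_ge0 ?sqr_ge0 // mulr_ge0 // ltW //.
Qed.

Lemma div_mono (c u : R) : 0 < c -> u ^+ 2 / (c + 1) <= u ^+ 2 / c.
Proof.
move=> c0.
have c1 : 0 < c + 1 by lra.
have e : u ^+ 2 / c - u ^+ 2 / (c + 1) = u ^+ 2 / (c * (c + 1)).
  field. by apply/andP; split; rewrite gt_eqF.
rewrite -subr_ge0 e divr_ge0 ?sqr_ge0 // mulr_ge0 // ltW //.
Qed.

Lemma leftP (y : nat -> R) k : forall i, (i <= k)%N ->
  y i ^+ 2 / (k.+1)%:R <= \sum_(j < k) (2 * y j ^+ 2 - 2 * (y j * y j.+1)) + y k ^+ 2.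
Proof.
elim: k => [|k IH] i hi.
  move: hi; rewrite leqn0 => /eqP ->. by rewrite big_ord0 add0r divr1.
rewrite big_ord_recr /=.
set S := \sum_(j < k) _.
have e : S + (2 * y k ^+ 2 - 2 * (y k * y k.+1)) + y k.+1 ^+ 2
   = (S + y k ^+ 2) + (y k - y k.+1) ^+ 2 by ring.
rewrite e -natr1.
have c0 : 0 < (k.+1)%:R :> R by rewrite ltr0n.
have sq : 0 <= (y k - y k.+1) ^+ 2 by apply: sqr_ge0.
case: (ltngtP i k.+1) hi => // [hik _|-> _].
  apply: le_trans (div_mono _ (y i) c0) _.
  by apply: le_trans (IH i hik) _; rewrite lerDl.
apply: le_trans (core_ineq _ (y k) (y k.+1) c0) _.
by rewrite lerD2r IH.
Qed.

Lemma rightP k : forall (y : nat -> R) i, (i <= k)%N ->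
  y i ^+ 2 / (k.+1)%:R <= \sum_(j < k) (2 * y j.+1 ^+ 2 - 2 * (y j * y j.+1)) + y 0%N ^+ 2.
Proof.
elim: k => [|k IH] y i hi.
  move: hi; rewrite leqn0 => /eqP ->. by rewrite big_ord0 add0r divr1.
rewrite big_ord_recl /=.
set T := \sum_(j < k) _.
have IH' := IH (fun t => y t.+1).
have e : 2 * y 1%N ^+ 2 - 2 * (y 0%N * y 1%N) + T + y 0%N ^+ 2
   = (T + y 1%N ^+ 2) + (y 1%N - y 0%N) ^+ 2 by ring.
rewrite e -natr1.
have c0 : 0 < (k.+1)%:R :> R by rewrite ltr0n.
have sq : 0 <= (y 1%N - y 0%N) ^+ 2 by apply: sqr_ge0.
case: i hi => [_|i hi].
  apply: le_trans (core_ineq _ (y 1%N) (y 0%N) c0) _.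
  by rewrite lerD2r (IH' 0%N (leq0n _)).
apply: le_trans (div_mono _ (y i.+1) c0) _.
by apply: le_trans (IH' i hi) _; rewrite lerDl.
Qed.

End H.

Lemma tridiag (R : comNzRingType) (m : nat -> nat -> R) (y : nat -> R) n :
 (forall i j, (i.+1 < j)%N -> m i j = 0) -> (forall i j, (j.+1 < i)%N -> m i j = 0) ->
 \sum_(i < n.+1) \sum_(j < n.+1) y i * m i j * y j =
 \sum_(i < n.+1) m i i * y i ^+ 2 + \sum_(i < n) (m i i.+1 + m i.+1 i) * (y i * y i.+1).
Proof.
move=> h1 h2; elim: n => [|n IH].
  by rewrite !big_ord1 big_ord0 addr0 /=; ring.
rewrite big_ord_recr /=.
under eq_bigr => i _ do rewrite big_ord_recr /=.
rewrite big_split /= IH.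
have c1 : \sum_(i < n.+1) y i * m i n.+1 * y n.+1 = y n * m n n.+1 * y n.+1.
  rewrite big_ord_recr /= big1 ?add0r // => i _.
  by rewrite h1 ?mulr0 ?mul0r // ltnS.
have c2 : \sum_(j < n.+2) y n.+1 * m n.+1 j * y j =
   y n.+1 * m n.+1 n * y n + y n.+1 * m n.+1 n.+1 * y n.+1.
  rewrite big_ord_recr big_ord_recr /= big1 ?add0r // => i _.
  by rewrite h2 ?mulr0 ?mul0r // ltnS.
rewrite c1 c2 [X in _ = _ + X]big_ord_recr [X in _ = X + _]big_ord_recr /=.
ring.
Qed.

Definition gn (R : pzRingType) (a : nat) (i j : nat) : R :=
  if i == j then (if i == a then 0 else 2%:R)
  else if (i.+1 == j) || (j.+1 == i) then -1 else 0.

Definition mn (R : pzRingType) (a : nat) (r1 r2 : R) (i j : nat) : R :=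
  if (i == a) && (j == a) then 1
  else if (i <= a)%N && (j <= a)%N then r1 * gn R a i j
  else if (a <= i)%N && (a <= j)%N then r2 * gn R a i j
  else 0.

Lemma mS_mn (R : pzRingType) a b (r1 r2 : R) (i j : 'I_(a + b + 1)) :
  mS R a b r1 r2 i j = mn R a r1 r2 i j.
Proof. by rewrite !mxE. Qed.

Section MN.
Variables (R : comNzRingType) (a : nat) (r1 r2 : R).

Lemma mn_z1 i j : (i.+1 < j)%N -> mn R a r1 r2 i j = 0.
Proof.
move=> h; rewrite /mn /gn.
have -> : (i == j) = false by lia.
have -> : (i.+1 == j) || (j.+1 == i) = false by lia.
have -> : (i == a) && (j == a) = false by lia.
by rewrite /= !mulr0 !if_same.
Qed.

Lemma mn_z2 i j : (j.+1 < i)%N -> mn R a r1 r2 i j = 0.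
Proof.
move=> h; rewrite /mn /gn.
have -> : (i == j) = false by lia.
have -> : (i.+1 == j) || (j.+1 == i) = false by lia.
have -> : (i == a) && (j == a) = false by lia.
by rewrite /= !mulr0 !if_same.
Qed.

Lemma mn_diag_lt i : (i < a)%N -> mn R a r1 r2 i i = r1 * 2.
Proof.
move=> h; rewrite /mn /gn eqxx.
have -> : (i == a) = false by lia.
by have -> : (i <= a)%N && (i <= a)%N = true by lia.
Qed.

Lemma mn_diag_gt i : (a < i)%N -> mn R a r1 r2 i i = r2 * 2.
Proof.
move=> h; rewrite /mn /gn eqxx.
have -> : (i == a) = false by lia.
have -> : (i <= a)%N && (i <= a)%N = false by lia.
by have -> : (a <= i)%N && (a <= i)%N = true by lia.
Qed.

Lemma mn_aa : mn R a r1 r2 a a = 1.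
Proof. by rewrite /mn eqxx. Qed.

Lemma mn_off_lt i : (i < a)%N -> mn R a r1 r2 i i.+1 + mn R a r1 r2 i.+1 i = - (r1 * 2).
Proof.
move=> h; rewrite /mn /gn.
have -> : (i == i.+1) = false by lia.
have -> : (i.+1 == i) = false by lia.
have -> : (i == a) && (i.+1 == a) = false by lia.
have -> : (i.+1 == a) && (i == a) = false by lia.
have -> : (i <= a)%N && (i.+1 <= a)%N = true by lia.
have -> : (i.+1 <= a)%N && (i <= a)%N = true by lia.
rewrite /= eqxx /= orbT; ring.
Qed.

Lemma mn_off_ge i : (a <= i)%N -> mn R a r1 r2 i i.+1 + mn R a r1 r2 i.+1 i = - (r2 * 2).
Proof.
move=> h; rewrite /mn /gn.
have -> : (i == i.+1) = false by lia.
have -> : (i.+1 == i) = false by lia.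
have -> : (i == a) && (i.+1 == a) = false by lia.
have -> : (i.+1 == a) && (i == a) = false by lia.
have -> : (i <= a)%N && (i.+1 <= a)%N = false by lia.
have -> : (i.+1 <= a)%N && (i <= a)%N = false by lia.
have -> : (a <= i)%N && (a <= i.+1)%N = true by lia.
have -> : (a <= i.+1)%N && (a <= i)%N = true by lia.
rewrite /= eqxx /= orbT; ring.
Qed.

End MN.

Lemma qform (R : comNzRingType) N (x : 'rV[R]_N) (M : 'M[R]_N) :
  (x *m M *m x^T) 0 0 = \sum_(i < N) \sum_(j < N) x 0 i * M i j * x 0 j.
Proof.
rewrite mxE; under eq_bigr => k _ do rewrite !mxE big_distrl /=.
rewrite exchange_big /=; apply: eq_bigr => i _; apply: eq_bigr => j _.
by [].
Qed.

Lemma posdef_diag (R : realFieldType) n (M : 'M[R]_n) : posdef M -> forall i, 0 < M i i.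
Proof.
move=> h i.
have nz : delta_mx 0 i != 0 :> 'rV[R]_n.
  apply/eqP => /matrixP /(_ 0 i); rewrite !mxE !eqxx /= => /eqP.
  by rewrite oner_eq0.
have := h _ nz.
by rewrite -rowE trmx_delta -colE !mxE.
Qed.

Theorem mainTheorem8 (R : realFieldType) (a b : nat) (ha : (1 <= a)%N) (hb : (1 <= b)%N)
  (r1 r2 : R) :
  (posdef (mS R a b r1 r2) /\ (forall i, mS R a b r1 r2 i i <= 1)) <->
  [/\ 0 < r1 <= 2^-1, 0 < r2 <= 2^-1 &
      (a%:R / (a.+1)%:R) * r1 + (b%:R / (b.+1)%:R) * r2 < 1].
Proof.
have i0lt : (0 < a + b + 1)%N by lia.
have ialt : (a < a + b + 1)%N by lia.
have illt : (a + b < a + b + 1)%N by lia.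
pose i0 := Ordinal i0lt. pose ia := Ordinal ialt. pose il := Ordinal illt.
have d0 : mS R a b r1 r2 i0 i0 = r1 * 2 by rewrite mS_mn mn_diag_lt.
have dl : mS R a b r1 r2 il il = r2 * 2 by rewrite mS_mn mn_diag_gt //=; lia.
split.
- case=> hpd hd.
  have p0 := posdef_diag _ _ _ hpd i0; have pl := posdef_diag _ _ _ hpd il.
  have h0 := hd i0; have hl := hd il.
  rewrite d0 in p0 h0; rewrite dl in pl hl.
  have ta : a%:R / (a.+1)%:R * r1 < r1.
    rewrite -[X in _ < X]mul1r ltr_pM2r ?ltr_pdivrMr ?mul1r ?ltr_nat ?ltr0n //; lra.
  have tb : b%:R / (b.+1)%:R * r2 < r2.
    rewrite -[X in _ < X]mul1r ltr_pM2r ?ltr_pdivrMr ?mul1r ?ltr_nat ?ltr0n //; lra.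
  split; [apply/andP; split|apply/andP; split|].
  lra. by rewrite -[2^-1]mul1r ler_pdivlMr.
  lra. by rewrite -[2^-1]mul1r ler_pdivlMr.
  move: ta tb h0 hl; set t1 := a%:R / _ * r1; set t2 := b%:R / _ * r2; lra.
- case=> /andP[r1p r1h] /andP[r2p r2h] _; split; last first.
    move=> i; rewrite mS_mn /mn /gn eqxx andbb.
    case: eqP => [_|ne] /=; first by [].
    case: ifP => _; first lra.
    case: ifP => _; lra.
  move=> x hx; rewrite qform.
  pose y k := x 0 (insubd ia k).
  have ey : forall i : 'I_(a + b + 1), x 0 i = y i by move=> i; rewrite /y valKd.
  have -> : \sum_(i < a + b + 1) \sum_(j < a + b + 1) x 0 i * mS R a b r1 r2 i j * x 0 j
      = \sum_(i < a + b + 1) \sum_(j < a + b + 1) y i * mn R a r1 r2 i j * y j.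
    by apply: eq_bigr => i _; apply: eq_bigr => j _; rewrite (ey i) (ey j) mS_mn.
  rewrite addn1 tridiag; last first.
  - exact: mn_z2.
  - exact: mn_z1.
  rewrite -(addnS a b) big_split_ord big_split_ord /= big_ord_recl /= addn0.
  have s1 : \sum_(i < a) mn R a r1 r2 i i * y i ^+ 2 = r1 * 2 * \sum_(i < a) y i ^+ 2.
    by rewrite mulr_sumr; apply: eq_bigr => i _; rewrite mn_diag_lt.
  have s2 : \sum_(i < b) mn R a r1 r2 (a + bump 0 i) (a + bump 0 i) * y (a + bump 0 i)%N ^+ 2
      = r2 * 2 * \sum_(i < b) y (a + i.+1)%N ^+ 2.
    rewrite mulr_sumr; apply: eq_bigr => i _.
    by rewrite (_ : bump 0 i = i.+1) // mn_diag_gt //; lia.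
  have s3 : \sum_(i < a) (mn R a r1 r2 i i.+1 + mn R a r1 r2 i.+1 i) * (y i * y i.+1)
      = - (r1 * 2) * \sum_(i < a) (y i * y i.+1).
    by rewrite mulr_sumr; apply: eq_bigr => i _; rewrite mn_off_lt.
  have s4 : \sum_(i < b) (mn R a r1 r2 (a + i) (a + i).+1 + mn R a r1 r2 (a + i).+1 (a + i))
        * (y (a + i)%N * y (a + i).+1)
      = - (r2 * 2) * \sum_(i < b) (y (a + i)%N * y (a + i.+1)%N).
    by rewrite mulr_sumr; apply: eq_bigr => i _; rewrite mn_off_ge ?leq_addr // addnS.
  rewrite s1 s2 s3 s4 mn_aa.
  pose w t := y (a + t)%N.
  have hL := leftP _ y a.
  have hR := rightP _ b w.
  set L := \sum_(j < a) (2 * y j ^+ 2 - 2 * (y j * y j.+1)) + y a ^+ 2 in hL.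
  set Rr := \sum_(j < b) (2 * w j.+1 ^+ 2 - 2 * (w j * w j.+1)) + w 0%N ^+ 2 in hR.
  have eL : L = 2 * \sum_(i < a) y i ^+ 2 - 2 * \sum_(i < a) (y i * y i.+1) + y a ^+ 2.
    by rewrite /L sumrB -!mulr_sumr.
  have eR : Rr = 2 * \sum_(i < b) y (a + i.+1)%N ^+ 2
      - 2 * \sum_(i < b) (y (a + i)%N * y (a + i.+1)%N) + y a ^+ 2.
    by rewrite /Rr sumrB -!mulr_sumr /w addn0.
  suff key : 0 < r1 * L + r2 * Rr + (1 - r1 - r2) * y a ^+ 2.
    apply: (lt_le_trans key); rewrite eL eR le_eqVlt; apply/orP; left; apply/eqP; ring.
  have [i hi] : exists i : 'I_(a + b + 1), x 0 i != 0.
    apply/existsP; apply: contraNT hx => /existsPn h.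
    apply/eqP/matrixP => p q; rewrite (ord1 p) mxE; exact/eqP/negPn/h.
  rewrite ey in hi.
  have c0 : forall n, 0 < (n.+1)%:R :> R by move=> n; rewrite ltr0n.
  have ypos : 0 < y i ^+ 2 by rewrite lt_def sqrf_eq0 hi sqr_ge0.
  have L0 : 0 <= L.
    have h1 := hL 0%N (leq0n _).
    have h2 : 0 <= y 0%N ^+ 2 / (a.+1)%:R by rewrite divr_ge0 ?sqr_ge0 ?ler0n.
    exact: le_trans h2 h1.
  have R0 : 0 <= Rr.
    have h1 := hR 0%N (leq0n _).
    have h2 : 0 <= w 0%N ^+ 2 / (b.+1)%:R by rewrite divr_ge0 ?sqr_ge0 ?ler0n.
    exact: le_trans h2 h1.
  have hi' := ltn_ord i.
  have Lpos_or : 0 < r1 * L \/ 0 < r2 * Rr.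
    case: (leqP i a) => h.
      left; apply: mulr_gt0 => //.
      have h1 := hL i h.
      have h2 : 0 < y i ^+ 2 / (a.+1)%:R by rewrite divr_gt0.
      exact: lt_le_trans h2 h1.
    right; apply: mulr_gt0 => //.
    have hk : (i - a <= b)%N by lia.
    have h1 := hR _ hk.
    have ew : w (i - a)%N = y i by rewrite /w subnKC // ltnW.
    rewrite ew in h1.
    have h2 : 0 < y i ^+ 2 / (b.+1)%:R by rewrite divr_gt0.
    exact: lt_le_trans h2 h1.
  have m1 : 0 <= r1 * L := mulr_ge0 (ltW r1p) L0.
  have m2 : 0 <= r2 * Rr := mulr_ge0 (ltW r2p) R0.
  have rr : 0 <= 1 - r1 - r2.
    move: r1h r2h; clear; lra.
  have m3 : 0 <= (1 - r1 - r2) * y a ^+ 2 := mulr_ge0 rr (sqr_ge0 _).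
  move: m1 m2 m3 Lpos_or.
  generalize (r1 * L) (r2 * Rr) ((1 - r1 - r2) * y a ^+ 2) => p q t.
  clear; move=> m1 m2 m3 [] ?; lra.
Qed.
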